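(* Let $\mathfrak{g}$ be a nilpotent real Lie algebra of dimension $6$, and let $\mathfrak{g}^*=V_1\oplus V_2$ be a coherent splitting of $\mathfrak{g}$. Then $V_1\subset\ker d$ and the derived length of $\mathfrak{g}$ is $1$ or $2$.
   Context: $d\colon\mathfrak{g}^*\to\Lambda^2\mathfrak{g}^*$ is the Chevalley–Eilenberg differential, $d\alpha(X,Y)=-\alpha([X,Y])$, extended to a derivation of $\Lambda^*\mathfrak{g}^*$. A coherent splitting is a decomposition $\mathfrak{g}^*=V_1\oplus V_2$ with $\dim V_1=2$ such that, with $\Lambda^{p,q}=\Lambda^pV_1\otimes\Lambda^qV_2$, $d(\Lambda^{p,q})\subset\Lambda^{p+1,q}+\Lambda^{p+2,q-1}$ for all $p,q$. The derived length is the least $n$ with $\mathcal{D}^n(\mathfrak{g})=0$, where $\mathcal{D}(\mathfrak{g})=[\mathfrak{g},\mathfrak{g}]$. *)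

(* Defs.v *)
From HB Require Import structures.
From mathcomp Require Import all_boot all_order all_algebra.
From mathcomp Require Import reals.
Set Implicit Arguments. Unset Strict Implicit. Unset Printing Implicit Defensive.
Import Order.TTheory GRing.Theory Num.Theory.
Local Open Scope ring_scope.

(* A 6-dimensional real Lie algebra g is modelled as 'rV[R]_6 with a bracket
   br. The dual g^* is modelled by row vectors, paired with g by [pair]. *)
Section Defs.
Variable R : realType.
Local Notation vec := 'rV[R]_6.

Definition pair (a X : vec) : R := (a *m X^T) 0 0.

Definition is_lie_bracket (br : vec -> vec -> vec) : Prop :=
  [/\ (forall (c : R) x y z, br (c *: x + y) z = c *: br x z + br y z),
      (forall (c : R) x y z, br x (c *: y + z) = c *: br x y + br x z),
      (forall x, br x x = 0) &
      (forall x y z, br x (br y z) + br y (br z x) + br z (br x y) = 0)].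

Definition brspan (br : vec -> vec -> vec) (S T : 'M[R]_6) : 'M[R]_6 :=
  (\sum_(i < 6) \sum_(j < 6) <<br (row i S) (row j T)>>)%MS.

Fixpoint lcs br (n : nat) : 'M[R]_6 :=
  if n is m.+1 then brspan br 1%:M (lcs br m) else 1%:M.

Fixpoint dser br (n : nat) : 'M[R]_6 :=
  if n is m.+1 then brspan br (dser br m) (dser br m) else 1%:M.

Definition nilpotent br : Prop := exists n, (lcs br n <= (0 : 'M[R]_6))%MS.

Definition derived_length br (n : nat) : Prop :=
  (dser br n <= (0 : 'M[R]_6))%MS /\ forall m, (m < n)%N -> ~~ (dser br m <= (0 : 'M[R]_6))%MS.

Definition form (k : nat) := ('I_k -> vec) -> R.

Definition one_form (a : vec) : form 1 := fun X => pair a (X ord0).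

(* Chevalley-Eilenberg differential:
   (dw)(X_0..X_k) = sum_{i<j} (-1)^(i+j) w([X_i,X_j], X_0,..^i..^j..,X_k);
   for k = 1 this gives d a (X,Y) = - a([X,Y]). *)
Definition dform br (k : nat) (w : form k) : form k.+1 := fun X =>
  \sum_(i < k.+1) \sum_(j < k.+1 | (i < j)%N)
     (-1) ^+ (i + j) *
     w (fun l : 'I_k => if l == 0 :> nat then br (X i) (X j)
                        else X (inord (bump j (bump i l.-1)))).

(* the decomposable form g_0 ^ ... ^ g_{k-1}, evaluated as det [g_i(X_j)] *)
Definition wedge (k : nat) (g : 'I_k -> vec) : form k :=
  fun X => \det (\matrix_(i < k, j < k) pair (g i) (X j)).

(* w lies in Lambda^{p,q} = Lambda^p V1 (x) Lambda^q V2 (as k-forms, k = p+q) *)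
Definition inLam (V1 V2 : 'M[R]_6) (p q k : nat) (w : form k) : Prop :=
  (p + q = k)%N /\
  exists n (c : 'I_n -> R) (g : 'I_n -> 'I_k -> vec),
    (forall t (i : 'I_k), ((i < p)%N -> (g t i <= V1)%MS) /\ ((p <= i)%N -> (g t i <= V2)%MS)) /\
    forall X, w X = \sum_(t < n) c t * wedge (g t) X.

Definition coherent_splitting br (V1 V2 : 'M[R]_6) : Prop :=
  [/\ \rank V1 = 2%N, mxdirect (V1 + V2), (V1 + V2 == 1%:M)%MS &
      forall p q (w : form (p + q)), inLam V1 V2 p q w ->
        exists w1 w2 : form (p + q).+1,
          inLam V1 V2 p.+1 q w1 /\
          ((q = 0%N /\ forall X, w2 X = 0) \/ inLam V1 V2 p.+2 q.-1 w2) /\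
          forall X, dform br w X = w1 X + w2 X].

End Defs.

(* Main.v *)
Require Import Defs.
From HB Require Import structures.
From mathcomp Require Import all_boot all_order all_algebra.
From mathcomp Require Import reals.
From mathcomp Require Import ring.
Import Order.TTheory GRing.Theory Num.Theory.
Local Open Scope ring_scope.

Section S.
Variable R : realType.
Local Notation vec := 'rV[R]_6.

Lemma pair_lin (a x y : vec) (c : R) : pair a (c *: x + y) = c * pair a x + pair a y.
Proof. by rewrite /pair linearD linearZ /= mulmxDr -scalemxAr !mxE. Qed.

Lemma pairDl (a b x : vec) : pair (a + b) x = pair a x + pair b x.
Proof. by rewrite /pair mulmxDl mxE. Qed.
Lemma pairZl (c : R) (a x : vec) : pair (c *: a) x = c * pair a x.
Proof. by rewrite /pair -scalemxAl mxE. Qed.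
Lemma pairDr (a x y : vec) : pair a (x + y) = pair a x + pair a y.
Proof. by have := pair_lin a x y 1; rewrite scale1r mul1r. Qed.
Lemma pair0r (a : vec) : pair a 0 = 0.
Proof. by rewrite /pair trmx0 mulmx0 mxE. Qed.
Lemma pairZr (c : R) (a x : vec) : pair a (c *: x) = c * pair a x.
Proof. by have := pair_lin a x 0 c; rewrite addr0 pair0r addr0. Qed.
Lemma pairNr (a x : vec) : pair a (- x) = - pair a x.
Proof. by rewrite -scaleN1r pairZr mulN1r. Qed.
Lemma pairBr (a x y : vec) : pair a (x - y) = pair a x - pair a y.
Proof. by rewrite pairDr pairNr. Qed.

Lemma pair_rows m n (B : 'M[R]_(m,6)) (C : 'M[R]_(n,6)) i j :
  pair (row i B) (row j C) = (C *m B^T) j i.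
Proof. rewrite /pair !mxE; apply: eq_bigr => k _; by rewrite !mxE mulrC. Qed.

Lemma det_row0 n (A : 'M[R]_n) i0 : (forall j, A i0 j = 0) -> \det A = 0.
Proof. by move=> H; rewrite (expand_det_row A i0) big1 // => j _; rewrite H mul0r. Qed.
Lemma det_col0 n (A : 'M[R]_n) j0 : (forall i, A i j0 = 0) -> \det A = 0.
Proof. by move=> H; rewrite (expand_det_col A j0) big1 // => j _; rewrite H mul0r. Qed.

Variable br : vec -> vec -> vec.
Lemma dform1 (a : vec) (X : 'I_2 -> vec) :
  dform br (one_form a) X = - pair a (br (X ord0) (X ord_max)).
Proof.
rewrite /dform (big_ord_recl 1) (big_ord_recl 0) big_ord0 addr0 /=.
rewrite !big_mkcond /= !big_ord_recl !big_ord0 /=.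
rewrite big_mkcond /= !big_ord_recl !big_ord0 /=.
rewrite /one_form /= expr1 mulN1r !add0r !addr0.
by have -> : lift ord0 ord0 = ord_max :> 'I_2 by apply: val_inj.
Qed.

Lemma vec0P (z : vec) : (forall a : vec, pair a z = 0) -> z = 0.
Proof.
move=> H; apply/rowP => j; rewrite mxE.
have := H (row j 1%:M); rewrite -{1}(row_id 0 z) pair_rows => <-.
by rewrite trmx1 mulmx1.
Qed.

Variables V1 V2 : 'M[R]_6.
Hypothesis Hlie : is_lie_bracket br.

Lemma brDl x y z : br (x + y) z = br x z + br y z.
Proof. by case: Hlie => Hl _ _ _; have := Hl 1 x y z; rewrite !scale1r. Qed.
Lemma brDr x y z : br z (x + y) = br z x + br z y.
Proof. by case: Hlie => _ Hr _ _; have := Hr 1 z x y; rewrite !scale1r. Qed.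
Lemma br0l z : br 0 z = 0.
Proof.
have h := brDl 0 0 z; rewrite addr0 in h.
by apply: (@addrI _ (br 0 z)); rewrite addr0 -h.
Qed.
Lemma br0r z : br z 0 = 0.
Proof.
have h := brDr 0 0 z; rewrite addr0 in h.
by apply: (@addrI _ (br z 0)); rewrite addr0 -h.
Qed.
Lemma brZl c x z : br (c *: x) z = c *: br x z.
Proof. by case: Hlie => Hl _ _ _; have := Hl c x 0 z; rewrite !addr0 br0l addr0. Qed.
Lemma brZr c x z : br z (c *: x) = c *: br z x.
Proof. by case: Hlie => _ Hr _ _; have := Hr c z x 0; rewrite !addr0 br0r addr0. Qed.
Lemma brxx x : br x x = 0.
Proof. by case: Hlie => _ _ H _; apply: H. Qed.
Lemma br_anti x y : br y x = - br x y.
Proof.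
have := brxx (x + y); rewrite brDl !brDr !brxx add0r addr0 => /eqP.
by rewrite addrC addr_eq0 => /eqP.
Qed.

Definition inh (x : vec) := forall v, (v <= V1)%MS -> pair v x = 0.

Hypothesis Hcoh : coherent_splitting br V1 V2.

Lemma P1 a : (a <= V1)%MS -> forall x u, inh u -> pair a (br x u) = 0.
Proof.
move=> aV x u hu; case: Hcoh => _ _ _ Hc.
have [|w1 [w2 [H1 [H2 H3]]]] := Hc 1%N 0%N (one_form a).
  split => //; exists 1%N, (fun _ => 1), (fun _ _ => a); split.
    move=> t i; split => //; case: i => [[|]] //=.
  by move=> X; rewrite big_ord1 mul1r /wedge det_mx11 mxE.
have w20 : forall X, w2 X = 0.
  by case: H2 => [[_ //]|[]].
pose X := fun i : 'I_2 => if val i == 0%N then x else u.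
have := H3 X; rewrite dform1 w20 addr0.
case: H1 => _ [n [c [g [Hg Hw]]]]; rewrite Hw big1.
  by move/eqP; rewrite oppr_eq0 => /eqP.
move=> t _; rewrite /wedge (@det_col0 _ _ ord_max) ?mulr0 // => i.
rewrite mxE /X /=; apply: hu; apply: (Hg t i).1.
by case: i => [[|[|]]].
Qed.

Lemma P0 a : (a <= V1)%MS -> forall x u, inh u -> pair a (br u x) = 0.
Proof. by move=> aV x u hu; rewrite br_anti pairNr P1 ?oppr0. Qed.

Lemma brlcs n x u : (u <= lcs br n)%MS -> (br x u <= lcs br n.+1)%MS.
Proof.
case/submxP => D ->; rewrite mulmx_sum_row -[x]mulmx1 mulmx_sum_row.
have bsl : forall (I : Type) (r : seq I) (F : I -> vec) z,
    br (\sum_(i <- r) F i) z = \sum_(i <- r) br (F i) z.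
  by move=> I r F z; apply: (big_morph (fun s => br s z) (fun a b => brDl a b z) (br0l z)).
have bsr : forall (I : Type) (r : seq I) (F : I -> vec) z,
    br z (\sum_(i <- r) F i) = \sum_(i <- r) br z (F i).
  by move=> I r F z; apply: (big_morph (fun s => br z s) (fun a b => brDr a b z) (br0r z)).
rewrite bsl; apply: summx_sub => i _; rewrite brZl scalemx_sub //.
rewrite bsr; apply: summx_sub => j _; rewrite brZr scalemx_sub //=.
rewrite /brspan; apply: (sumsmx_sup i) => //; apply: (sumsmx_sup j) => //.
by rewrite genmxE.
Qed.

Hypothesis Hnil : nilpotent br.

Lemma iter_lemma x0 z : (forall a, (a <= V1)%MS -> pair a (br x0 z) = pair a z) ->
  forall a, (a <= V1)%MS -> pair a z = 0.
Proof.
move=> Hx; case: Hnil => N HN.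
have key : forall n, (iter n (br x0) z <= lcs br n)%MS /\ (forall a, (a <= V1)%MS -> pair a (iter n (br x0) z) = pair a z).
  elim=> [|n [IH1 IH2]]; first by split => //; apply: submx1.
  split; first by apply: brlcs.
  move=> a aV /=; rewrite -(subrK z (iter n (br x0) z)) brDr pairDr Hx //.
  rewrite P1 ?add0r // => v vV; by rewrite pairBr IH2 // subrr.
case: (key N) => K1 K2 a aV; rewrite -K2 //.
have: (iter N (br x0) z <= (0 : 'M[R]_6))%MS by apply: submx_trans K1 HN.
by rewrite submx0 => /eqP ->; rewrite pair0r.
Qed.

Lemma basis : exists al be e1 e2 : vec,
  [/\ (al <= V1)%MS, (be <= V1)%MS,
      (forall a, (a <= V1)%MS -> exists u v, a = u *: al + v *: be) &
      [/\ pair al e1 = 1, pair be e1 = 0, pair al e2 = 0 & pair be e2 = 1]].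
Proof.
case: Hcoh => rk _ _ _.
have := eq_row_base V1; move: (row_base V1); rewrite rk => B eqB.
have rB : \rank B = 2%N by rewrite eqB.
have : row_full B^T by rewrite /row_full mxrank_tr rB.
case/row_fullP => C HC.
exists (row 0 B), (row 1 B), (row 0 C), (row 1 C); split.
- by rewrite -eqB row_sub.
- by rewrite -eqB row_sub.
- move=> a; rewrite -eqB => /submxP [D ->]; rewrite mulmx_sum_row.
  rewrite !big_ord_recl big_ord0 /= addr0. exists (D 0 0), (D 0 1). have e1 : lift ord0 ord0 = 1 :> 'I_2 by apply: val_inj. have e0 : ord0 = 0 :> 'I_2 by apply: val_inj. by rewrite e1 e0.
- by rewrite !pair_rows HC !mxE; split.
Qed.

Section Basis.
Variables al be e1 e2 : vec.
Hypotheses (Hal : (al <= V1)%MS) (Hbe : (be <= V1)%MS)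
  (Hsp : forall a, (a <= V1)%MS -> exists u v, a = u *: al + v *: be)
  (H11 : pair al e1 = 1) (H21 : pair be e1 = 0)
  (H12 : pair al e2 = 0) (H22 : pair be e2 = 1).

Lemma decomp p : inh (p - pair al p *: e1 - pair be p *: e2).
Proof.
move=> v /Hsp [u [w ->]].
rewrite !pairDl !pairZl !pairBr !pairZr H11 H21 H12 H22.
ring.
Qed.

Lemma eqdec p : p = pair al p *: e1 + pair be p *: e2 + (p - pair al p *: e1 - pair be p *: e2).
Proof. by apply/rowP => k; rewrite !mxE; ring. Qed.

Lemma Fform a : (a <= V1)%MS -> forall x y,
  pair a (br x y) = (pair al x * pair be y - pair be x * pair al y) * pair a (br e1 e2).
Proof.
move=> aV x y.
have hx := decomp x; have ex := eqdec x.
have hy := decomp y; have ey := eqdec y.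
move: hx ex hy ey; set Ux := x - _ - _; set Uy := y - _ - _.
move=> hx ex hy ey; clearbody Ux Uy.
rewrite {1}ex !brDl !brZl !pairDr !pairZr (P0 _ aV _ _ hx) addr0.
rewrite {1 2}ey !brDr !brZr !pairDr !pairZr !(P1 _ aV _ _ hy) !addr0.
rewrite !brxx (br_anti e1 e2) pairNr !pair0r.
ring.
Qed.

Lemma w_inh a : (a <= V1)%MS -> pair a (br e1 e2) = 0.
Proof.
set w := br e1 e2; set s := pair al w; set t := pair be w.
have [t0|tn0] := eqVneq t 0.
  have [s0|sn0] := eqVneq s 0.
    move=> aV; have := decomp w a aV; rewrite -/s -/t s0 t0 !scale0r !subr0 //.
  apply: (iter_lemma (- s^-1 *: e2)) => a0 aV0.
  rewrite brZl pairZr Fform // H12 H22 -/s -/t.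
  by field.
apply: (iter_lemma (t^-1 *: e1)) => a0 aV0.
rewrite brZl pairZr Fform // H11 H21 -/s -/t.
by field.
Qed.

Lemma partA a : (a <= V1)%MS -> forall x y, pair a (br x y) = 0.
Proof. by move=> aV x y; rewrite Fform // w_inh // mulr0. Qed.
End Basis.

Lemma wedge_zero k p q (w : Defs.form R k) X : inLam V1 V2 p q w -> (0 < p)%N ->
  (forall j, inh (X j)) -> w X = 0.
Proof.
case=> pq [n [c [g [Hg Hw]]]] p0 hX; rewrite Hw big1 // => t _.
have k0 : (0 < k)%N by rewrite -pq (leq_trans p0) // leq_addr.
rewrite /wedge (@det_row0 _ _ (Ordinal k0)) ?mulr0 // => j.
by rewrite mxE; apply: hX; apply: (Hg t (Ordinal k0)).1.
Qed.

Hypothesis HA : forall a, (a <= V1)%MS -> forall x y, pair a (br x y) = 0.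

Lemma partB x y : inh x -> inh y -> br x y = 0.
Proof.
move=> hx hy; apply: vec0P => a.
case: Hcoh => _ _ Hfull Hc.
have : (a <= V1 + V2)%MS by rewrite (eqmxP Hfull) submx1.
case/sub_addsmxP => [[D1 D2] /= ->]; rewrite pairDl HA ?submxMl // add0r.
set a2 := D2 *m V2.
have [|w1 [w2 [H1 [H2 H3]]]] := Hc 0%N 1%N (one_form a2).
  split => //; exists 1%N, (fun _ => 1), (fun _ _ => a2); split.
    by move=> t i; split => // _; apply: submxMl.
  by move=> X; rewrite big_ord1 mul1r /wedge det_mx11 mxE.
pose X := fun i : 'I_2 => if val i == 0%N then x else y.
have hX : forall j, inh (X j) by move=> j; rewrite /X; case: (val j == 0%N).
have := H3 X; rewrite dform1 (wedge_zero _ _ _ _ _ H1) // add0r.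
have -> : w2 X = 0.
  case: H2 => [[//]|H2]; exact: (wedge_zero _ _ _ _ _ H2).
by move/eqP; rewrite oppr_eq0 => /eqP.
Qed.
End S.

Lemma inh_ker (R : realType) (V1 : 'M[R]_6) x : (x <= kermx V1^T)%MS -> inh R V1 x.
Proof.
rewrite sub_kermx => /eqP H v /submxP [D ->].
rewrite /pair -mulmxA.
have -> : V1 *m x^T = (x *m V1^T)^T by rewrite trmx_mul trmxK.
by rewrite H trmx0 mulmx0 mxE.
Qed.

Lemma not10 (R : realType) : ~~ (1%:M <= (0 : 'M[R]_6))%MS.
Proof. by apply/negP => /mxrankS; rewrite mxrank1 mxrank0. Qed.

Theorem lemma4 (R : realType) (br : 'rV[R]_6 -> 'rV[R]_6 -> 'rV[R]_6)
  (V1 V2 : 'M[R]_6) :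
  is_lie_bracket br -> nilpotent br -> coherent_splitting br V1 V2 ->
  (forall a : 'rV[R]_6, (a <= V1)%MS ->
     forall X : 'I_2 -> 'rV[R]_6, dform br (one_form a) X = 0) /\
  (derived_length br 1 \/ derived_length br 2).
Proof.
move=> Hl Hn Hc.
have [al [be [e1 [e2 [Hal Hbe Hsp [H11 H21 H12 H22]]]]]] := @basis _ _ _ _ Hc.
have HA := @partA _ _ _ _ Hl Hc Hn _ _ _ _ Hsp H11 H21 H12 H22.
split.
  by move=> a aV X; rewrite dform1 HA // oppr0.
have brK : forall x y, (br x y <= kermx V1^T)%MS.
  move=> x y; rewrite sub_kermx; apply/eqP/rowP => j.
  by rewrite [RHS]mxE -(@pair_rows _ _ _ V1 (br x y) j 0) row_id HA ?row_sub.
have D1K : (dser br 1 <= kermx V1^T)%MS.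
  rewrite /= /brspan; apply/sumsmx_subP => i0 _; apply/sumsmx_subP => j0 _; rewrite genmxE; apply: brK.
have D2 : (dser br 2 <= (0 : 'M[R]_6))%MS.
  rewrite /= /brspan; apply/sumsmx_subP => i _; apply/sumsmx_subP => j _.
  rewrite (@partB _ _ _ _ Hc HA) ?genmx0 ?submx_refl //; apply: inh_ker;
    exact: submx_trans (row_sub _ _) D1K.
case: (boolP (dser br 1 <= (0 : 'M[R]_6))%MS) => [H|H]; [left|right]; split => //.
  by case=> [|m] // _; apply: not10.
by case=> [|[|m]] // _; apply: not10.
Qed.
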